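(* Let $d:\mathcal{A}\to A$ be any derivation. Then $d(\mathcal{A}\cap\mathcal{K})\subseteq\mathcal{K}$. Consequently $d$ induces a derivation $[d]:[\mathcal{A}]\to A/\mathcal{K}\cong C(S^1)\oplus C(S^1)$, $[d]([a])=[d(a)]$.
   Context: Let $\{E_k\}$ be the canonical basis of $\ell^2(\mathbb{Z})$, $UE_k=E_{k+1}$, $\mathbb{K}E_k=kE_k$, $a(\mathbb{K})E_k=a(k)E_k$. $c(\mathbb{Z})$ is the set of $a:\mathbb{Z}\to\mathbb{C}$ with limits $a(\pm\infty)$ at $\pm\infty$; $A$ is the C$^*$-algebra generated by $U$ and all $a(\mathbb{K})$, $a\in c(\mathbb{Z})$. $\mathcal{A}$ is the algebra of finite sums $\sum_nU^na_n(\mathbb{K})$ with each $a_n$ eventually constant (constant on $k\ge k_0$ and on $k\le-k_0$ for some $k_0$). $\mathcal{K}$ is the ideal of compact operators on $\ell^2(\mathbb{Z})$; it is contained in $A$ and $A/\mathcal{K}\cong C(S^1)\oplus C(S^1)$ via $\sigma=(\sigma_+,\sigma_-)$, $\sigma_\pm(U)=e^{ix}$, $\sigma_\pm(a(\mathbb{K}))=a(\pm\infty)$; $[\mathcal{A}]$ denotes the image of $\mathcal{A}$. A derivation is a linear map satisfying the Leibniz rule. *)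

(* Defs.v *)
From HB Require Import structures.
From mathcomp Require Import all_boot all_order all_algebra.
From mathcomp Require Import all_classical all_reals.
From mathcomp Require Import complex.
Import ComplexField Normc.

Set Implicit Arguments.
Unset Strict Implicit.
Unset Printing Implicit Defensive.

Import Order.TTheory GRing.Theory Num.Theory.
Local Open Scope ring_scope.
Local Open Scope classical_set_scope.

(* Operators are
   maps (int -> R[i]) -> (int -> R[i]); only their behaviour on l^2(Z)
   matters, and operators are compared with [opeq] (equality on l^2). *)

Section L2Z.
Variable R : realType.

Definition vec := int -> R[i].
Definition op := vec -> vec.

Definition cabs2 (z : R[i]) : R := normc z ^+ 2.
Definition conjc (z : R[i]) : R[i] := Complex (complex.Re z) (- complex.Im z).

(* partial sums of |x_k|^2 over -n <= k < n *)
Definition sqn (x : vec) (n : nat) : R :=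
  \sum_(i < n.*2) cabs2 (x (i%:Z - n%:Z)).

Definition l2 (x : vec) : Prop := exists M : R, forall n, sqn x n <= M.

(* squared l^2 norm *)
Definition nrm2 (x : vec) : R := sup (range (sqn x)).

Definition vadd (x y : vec) : vec := fun k => x k + y k.
Definition vscale (c : R[i]) (x : vec) : vec := fun k => c * x k.
Definition vsub (x y : vec) : vec := fun k => x k - y k.

Definition oadd (S T : op) : op := fun x => vadd (S x) (T x).
Definition osub (S T : op) : op := fun x => vsub (S x) (T x).
Definition oscale (c : R[i]) (T : op) : op := fun x => vscale c (T x).
Definition ocomp (S T : op) : op := fun x => S (T x).

Definition opeq (S T : op) : Prop := forall x, l2 x -> S x = T x.

Definition bounded (T : op) : Prop :=
  [/\ (forall x, l2 x -> l2 (T x)),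
      (forall x y, l2 x -> l2 y -> T (vadd x y) = vadd (T x) (T y)),
      (forall c x, l2 x -> T (vscale c x) = vscale c (T x)) &
      exists M : R, forall x, l2 x -> nrm2 (T x) <= M * nrm2 x].

(* squared operator norm *)
Definition opnorm2 (T : op) : R :=
  sup [set nrm2 (T x) | x in [set x | l2 x /\ nrm2 x <= 1]].

Definition E (j : int) : vec := fun k => if k == j then 1 else 0.

(* S is the adjoint of T:  <E_i, S E_j> = <T E_i, E_j> *)
Definition adjoint_of (S T : op) : Prop :=
  forall i j, S (E j) i = conjc (T (E i) j).

(* compact operator: bounded, and the image of every sequence in the unit
   ball has a Cauchy (hence, l^2 being complete, convergent) subsequence *)
Definition compact (T : op) : Prop :=
  bounded T /\
  forall x : nat -> vec, (forall n, l2 (x n) /\ nrm2 (x n) <= 1) ->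
  exists phi : nat -> nat, (forall n, (phi n < phi n.+1)%N) /\
    forall e : R, 0 < e -> exists N : nat, forall m n : nat,
      (N <= m)%N -> (N <= n)%N ->
      nrm2 (vsub (T (x (phi m))) (T (x (phi n)))) < e.

(* U E_k = E_{k+1}, i.e. (U x)_k = x_{k-1} *)
Definition shiftU : op := fun x k => x (k - 1).
(* a(K) E_k = a(k) E_k *)
Definition multK (a : int -> R[i]) : op := fun x k => a k * x k.

Definition cZ (a : int -> R[i]) : Prop :=
  exists lp lm : R[i],
    (forall e : R, 0 < e -> exists N : int, forall k, N <= k -> normc (a k - lp) < e) /\
    (forall e : R, 0 < e -> exists N : int, forall k, k <= - N -> normc (a k - lm) < e).

Definition ev_const (a : int -> R[i]) : Prop :=
  exists k0 : int, forall k,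
    (k0 <= k -> a k = a k0) /\ (k <= - k0 -> a k = a (- k0)).

Definition cstar_closed (S : op -> Prop) : Prop :=
  (forall T, S T -> bounded T) /\
  (forall T1 T2, S T1 -> S T2 -> S (oadd T1 T2)) /\
  (forall c T, S T -> S (oscale c T)) /\
  (forall T1 T2, S T1 -> S T2 -> S (ocomp T1 T2)) /\
  (forall T T', S T -> bounded T' -> adjoint_of T' T -> S T') /\
  (forall T, bounded T ->
     (forall e : R, 0 < e -> exists T', S T' /\ opnorm2 (osub T T') < e) ->
     S T).

(* A : the C*-algebra generated by U and all a(K), a in c(Z) *)
Definition Acal (T : op) : Prop :=
  forall S : op -> Prop, cstar_closed S -> S shiftU ->
    (forall a, cZ a -> S (multK a)) -> S T.

(* calA : finite sums  sum_n U^n a_n(K)  with a_n eventually constant;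
   (U^n a(K) x)_k = a(k-n) x_(k-n) *)
Definition Aalg (T : op) : Prop :=
  exists (m : nat) (ns : 'I_m -> int) (as_ : 'I_m -> int -> R[i]),
    (forall i, ev_const (as_ i)) /\
    opeq T (fun x k => \sum_(i < m) as_ i (k - ns i) * x (k - ns i)).

Definition Kcal (T : op) : Prop := compact T.

Definition derivation (d : op -> op) : Prop :=
  [/\ (forall a, Aalg a -> Acal (d a)),
      (forall a b, Aalg a -> Aalg b -> opeq a b -> opeq (d a) (d b)),
      (forall a b, Aalg a -> Aalg b -> opeq (d (oadd a b)) (oadd (d a) (d b))),
      (forall c a, Aalg a -> opeq (d (oscale c a)) (oscale c (d a))) &
      (forall a b, Aalg a -> Aalg b ->
         opeq (d (ocomp a b)) (oadd (ocomp a (d b)) (ocomp (d a) b)))].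

End L2Z.

(* Main.v *)
Require Import Defs.
From HB Require Import structures.
From mathcomp Require Import all_boot all_order all_algebra.
From mathcomp Require Import all_classical all_reals.
From mathcomp Require Import complex.
From mathcomp Require Import topology normedtype sequences.
From mathcomp Require Import zify ring lra.
Import ComplexField Normc.
Import numFieldNormedType.Exports.
Set Implicit Arguments.
Unset Strict Implicit.
Unset Printing Implicit Defensive.
Import Order.TTheory GRing.Theory Num.Theory.
Local Open Scope ring_scope.
Local Open Scope classical_set_scope.

Section S.
Variable R : realType.
Implicit Types (x y : vec R) (T : op R).

Lemma normc_ge0 (z : R[i]) : 0 <= normc z.
Proof. by case: z => a b; rewrite /normc sqrtr_ge0. Qed.

Lemma cabs2_ge0 (z : R[i]) : 0 <= cabs2 z.
Proof. by rewrite /cabs2 sqr_ge0. Qed.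

Lemma cabs2M (z w : R[i]) : cabs2 (z * w) = cabs2 z * cabs2 w.
Proof. by rewrite /cabs2 normcM exprMn. Qed.

Lemma cabs2D (z w : R[i]) : cabs2 (z + w) <= 2 * cabs2 z + 2 * cabs2 w.
Proof.
rewrite /cabs2; have h := le_normcD z w; have h1 := normc_ge0 z; have h2 := normc_ge0 w.
have h3 := normc_ge0 (z + w).
apply: (@le_trans _ _ ((normc z + normc w) ^+ 2)).
  by rewrite ler_pXn2r // ?nnegrE // addr_ge0.
have := sqr_ge0 (normc z - normc w); nra.
Qed.

Lemma cabs2N (z : R[i]) : cabs2 (- z) = cabs2 z.
Proof. by rewrite /cabs2 normcN. Qed.

Lemma cabs2B (z w : R[i]) : cabs2 (z - w) <= 2 * cabs2 z + 2 * cabs2 w.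
Proof. by rewrite -(cabs2N w) cabs2D. Qed.

Lemma cabs20 : cabs2 (0 : R[i]) = 0.
Proof. by rewrite /cabs2 normc0 expr0n. Qed.

Lemma cabs21 : cabs2 (1 : R[i]) = 1.
Proof. by rewrite /cabs2 normc1 expr1n. Qed.

Lemma cabs2_eq0 (z : R[i]) : cabs2 z = 0 -> z = 0.
Proof. by move=> /eqP; rewrite /cabs2 sqrf_eq0 => /eqP /eq0_normc. Qed.

Lemma cabs2_lt1 (z : R[i]) : normc z < 1 -> cabs2 z < 1.
Proof. rewrite /cabs2 => h; have := normc_ge0 z; nra. Qed.

Lemma sqn_ge0 x n : 0 <= sqn x n.
Proof. by rewrite /sqn sumr_ge0 // => i _; exact: cabs2_ge0. Qed.

Lemma l2_nrm2_ub x n : l2 x -> sqn x n <= nrm2 x.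
Proof.
move=> [M HM]; apply: ub_le_sup; last by exists n.
by exists M => _ [k _ <-].
Qed.

Lemma nrm2_le x M : (forall n, sqn x n <= M) -> nrm2 x <= M.
Proof. by move=> H; apply: ge_sup; [exists (sqn x 0); exists 0|move=> _ [k _ <-]]. Qed.

Lemma nrm2_ge0 x : l2 x -> 0 <= nrm2 x.
Proof. by move=> h; apply: le_trans (l2_nrm2_ub 0 h); exact: sqn_ge0. Qed.

Lemma sqn_window x n (k : int) : - (n%:Z) <= k -> k < n%:Z -> cabs2 (x k) <= sqn x n.
Proof.
move=> h1 h2; rewrite /sqn.
have hi : (absz (k + n%:Z)%R < n.*2)%N by lia.
rewrite (bigD1 (Ordinal hi)) //= -[X in X <= _]addr0 lerD //.
  by rewrite le_eqVlt; apply/orP; left; apply/eqP; congr (cabs2 (x _)); lia.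
by rewrite sumr_ge0 // => i _; exact: cabs2_ge0.
Qed.

Lemma coord_le x k : l2 x -> cabs2 (x k) <= nrm2 x.
Proof.
move=> h; apply: le_trans (l2_nrm2_ub (absz k).+1 h); apply: sqn_window; lia.
Qed.


Lemma sqn_add x y n : sqn (vadd x y) n <= 2 * sqn x n + 2 * sqn y n.
Proof.
rewrite /sqn !mulr_sumr -big_split /=; apply: ler_sum => i _; exact: cabs2D.
Qed.

Lemma sqn_sub x y n : sqn (vsub x y) n <= 2 * sqn x n + 2 * sqn y n.
Proof.
rewrite /sqn !mulr_sumr -big_split /=; apply: ler_sum => i _; exact: cabs2B.
Qed.

Lemma sqn_scale c x n : sqn (vscale c x) n = cabs2 c * sqn x n.
Proof. by rewrite /sqn mulr_sumr; apply: eq_bigr => i _; rewrite cabs2M. Qed.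

Lemma l2_add x y : l2 x -> l2 y -> l2 (vadd x y).
Proof.
move=> hx hy; exists (2 * nrm2 x + 2 * nrm2 y) => n.
apply: le_trans (sqn_add x y n) _; apply: lerD; apply: ler_wpM2l => //; exact: l2_nrm2_ub.
Qed.

Lemma l2_sub x y : l2 x -> l2 y -> l2 (vsub x y).
Proof.
move=> hx hy; exists (2 * nrm2 x + 2 * nrm2 y) => n.
apply: le_trans (sqn_sub x y n) _; apply: lerD; apply: ler_wpM2l => //; exact: l2_nrm2_ub.
Qed.

Lemma l2_scale c x : l2 x -> l2 (vscale c x).
Proof.
move=> hx; exists (cabs2 c * nrm2 x) => n; rewrite sqn_scale.
apply: ler_wpM2l; [exact: cabs2_ge0|exact: l2_nrm2_ub].
Qed.

Lemma nrm2_add x y : l2 x -> l2 y -> nrm2 (vadd x y) <= 2 * nrm2 x + 2 * nrm2 y.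
Proof.
move=> hx hy; apply: nrm2_le => n.
apply: le_trans (sqn_add x y n) _; apply: lerD; apply: ler_wpM2l => //; exact: l2_nrm2_ub.
Qed.

Lemma nrm2_sub x y : l2 x -> l2 y -> nrm2 (vsub x y) <= 2 * nrm2 x + 2 * nrm2 y.
Proof.
move=> hx hy; apply: nrm2_le => n.
apply: le_trans (sqn_sub x y n) _; apply: lerD; apply: ler_wpM2l => //; exact: l2_nrm2_ub.
Qed.

Lemma nrm2_scale c x : l2 x -> nrm2 (vscale c x) <= cabs2 c * nrm2 x.
Proof.
move=> hx; apply: nrm2_le => n; rewrite sqn_scale.
apply: ler_wpM2l; [exact: cabs2_ge0|exact: l2_nrm2_ub].
Qed.

Definition vzero : vec R := fun _ => 0.

Lemma sqn_zero n : sqn vzero n = 0.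
Proof. by rewrite /sqn big1 // => i _; rewrite /vzero cabs20. Qed.

Lemma l2_zero : l2 vzero.
Proof. by exists 0 => n; rewrite sqn_zero. Qed.

Lemma nrm2_zero : nrm2 vzero <= 0.
Proof. by apply: nrm2_le => n; rewrite sqn_zero. Qed.

Lemma sqn_E j n : sqn (@E R j) n <= 1.
Proof.
rewrite /sqn; case: (boolP [exists i : 'I_(n.*2), (i%:Z - n%:Z) == j]).
  move=> /existsP [i0 /eqP hi0]; rewrite (bigD1 i0) //= big1.
    by rewrite addr0 /E hi0 eqxx cabs21.
  move=> i hi; rewrite /E; case: eqP => h; last by rewrite cabs20.
  by exfalso; move: hi => /eqP; apply; apply: val_inj => /=; lia.
move=> /existsPn hn; rewrite big1 // => i _; rewrite /E.
by move: (hn i) => /negbTE ->; rewrite cabs20.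
Qed.

Lemma l2_E j : l2 (@E R j).
Proof. by exists 1; exact: sqn_E. Qed.

Lemma nrm2_E j : nrm2 (@E R j) <= 1.
Proof. by apply: nrm2_le; exact: sqn_E. Qed.


Lemma bounded_add T1 T2 : bounded T1 -> bounded T2 -> bounded (oadd T1 T2).
Proof.
move=> [l1 a1 s1 [M1 h1]] [l2' a2 s2 [M2 h2]]; split.
- by move=> x hx; apply: l2_add; auto.
- move=> x y hx hy; rewrite /oadd a1 // a2 //; apply/funext => k /=.
  by rewrite /vadd; ring.
- move=> c x hx; rewrite /oadd s1 // s2 //; apply/funext => k /=.
  by rewrite /vadd /vscale; ring.
- exists (2 * M1 + 2 * M2) => x hx; apply: le_trans (nrm2_add (l1 _ hx) (l2' _ hx)) _.
  have := h1 _ hx; have := h2 _ hx; nra.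
Qed.

Lemma bounded_scale c T : bounded T -> bounded (oscale c T).
Proof.
move=> [l1 a1 s1 [M1 h1]]; split.
- by move=> x hx; apply: l2_scale; auto.
- move=> x y hx hy; rewrite /oscale a1 //; apply/funext => k /=.
  by rewrite /vadd /vscale; ring.
- move=> c' x hx; rewrite /oscale s1 //; apply/funext => k /=.
  by rewrite /vscale; ring.
- exists (cabs2 c * M1) => x hx; apply: le_trans (nrm2_scale c (l1 _ hx)) _.
  rewrite -mulrA; apply: ler_wpM2l; [exact: cabs2_ge0| auto].
Qed.

Lemma bounded_le T x : bounded T -> l2 x -> exists M, 0 <= M /\ nrm2 (T x) <= M * nrm2 x.
Proof.
move=> [l1 a1 s1 [M1 h1]] hx; exists `|M1|; split => //.
apply: le_trans (h1 _ hx) _; apply: ler_wpM2r; [exact: nrm2_ge0| exact: ler_norm].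
Qed.

Lemma bounded_M T : bounded T -> exists M, 0 <= M /\ forall x, l2 x -> nrm2 (T x) <= M * nrm2 x.
Proof.
move=> [l1 a1 s1 [M1 h1]]; exists `|M1|; split => // x hx.
apply: le_trans (h1 _ hx) _; apply: ler_wpM2r; [exact: nrm2_ge0| exact: ler_norm].
Qed.

Lemma bounded_comp S T : bounded S -> bounded T -> bounded (ocomp S T).
Proof.
move=> hS hT; have [MS [MS0 hMS]] := bounded_M hS; have [MT [MT0 hMT]] := bounded_M hT.
move: hS hT => [l1 a1 s1 _] [l2' a2 s2 _]; split.
- by move=> x hx; rewrite /ocomp; auto.
- by move=> x y hx hy; rewrite /ocomp a2 // a1 //; auto.
- by move=> c x hx; rewrite /ocomp s2 // s1 //; auto.
- exists (MS * MT) => x hx; apply: le_trans (hMS _ (l2' _ hx)) _.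
  rewrite -mulrA; apply: ler_wpM2l => //; auto.
Qed.

Lemma sum_widen (f : nat -> R) a b : (forall i, 0 <= f i) -> (a <= b)%N ->
  \sum_(i < a) f i <= \sum_(i < b) f i.
Proof.
move=> f0; elim: b => [|b IH]; first by rewrite leqn0 => /eqP ->.
rewrite leq_eqVlt => /orP [/eqP ->//|]; rewrite ltnS => /IH h.
by rewrite big_ord_recr /= -[X in X <= _]addr0; apply: lerD.
Qed.

Lemma bounded_shift : bounded (@shiftU R).
Proof.
have key x n : sqn (shiftU x) n <= sqn x n.+1.
  rewrite /sqn /shiftU.
  have -> : \sum_(i < n.*2) cabs2 (x (i%:Z - n%:Z - 1)) =
            \sum_(i < n.*2) cabs2 (x (i%:Z - n.+1%:Z)).
    by apply: eq_bigr => i _; congr (cabs2 (x _)); lia.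
  have := @sum_widen (fun i : nat => cabs2 (x (i%:Z - n.+1%:Z))) n.*2 n.+1.*2.
  apply; first by move=> i; exact: cabs2_ge0.
  by rewrite doubleS; lia.
split.
- by move=> x [M hM]; exists M => n; apply: le_trans (key x n) _.
- by [].
- by [].
- exists 1 => x hx; rewrite mul1r; apply: nrm2_le => n; apply: le_trans (key x n) _.
  exact: l2_nrm2_ub.
Qed.

Lemma bounded_multK (a : int -> R[i]) B : (forall k, cabs2 (a k) <= B) -> bounded (multK a).
Proof.
move=> hB.
have key x n : sqn (multK a x) n <= B * sqn x n.
  rewrite /sqn mulr_sumr; apply: ler_sum => i _; rewrite /multK cabs2M.
  by apply: ler_wpM2r; [exact: cabs2_ge0|].
have B0 : 0 <= B by apply: le_trans (cabs2_ge0 (a 0)) (hB 0).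
split.
- move=> x hx; exists (B * nrm2 x) => n; apply: le_trans (key x n) _.
  by apply: ler_wpM2l => //; exact: l2_nrm2_ub.
- by move=> x y _ _; apply/funext => k; rewrite /multK /vadd mulrDr.
- by move=> c x _; apply/funext => k; rewrite /multK /vscale mulrCA.
- exists B => x hx; apply: nrm2_le => n; apply: le_trans (key x n) _.
  by apply: ler_wpM2l => //; exact: l2_nrm2_ub.
Qed.


Lemma cZ_bound (a : int -> R[i]) : cZ a -> exists B, forall k, cabs2 (a k) <= B.
Proof.
move=> [lp [lm [hp hm]]].
have [N1 hN1] := hp 1 ltr01; have [N2 hN2] := hm 1 ltr01.
set K := (absz N1 + absz N2)%N.
have h3 k : cabs2 (a k) <= (2 + 2 * cabs2 lp) + (2 + 2 * cabs2 lm) + sqn a K.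
  have g1 := cabs2_ge0 lp; have g2 := cabs2_ge0 lm; have g3 := sqn_ge0 a K.
  case: (boolP (K%:Z <= k)) => hk.
    have := cabs2_lt1 (hN1 k ltac:(lia)).
    have := cabs2D (a k - lp) lp; rewrite subrK; lra.
  case: (boolP (k <= - K%:Z)) => hk2.
    have := cabs2_lt1 (hN2 k ltac:(lia)).
    have := cabs2D (a k - lm) lm; rewrite subrK; lra.
  have := sqn_window a (n:=K) (k:=k) ltac:(lia) ltac:(lia); lra.
by eexists; exact: h3.
Qed.

Lemma cstar_bounded : cstar_closed (@bounded R).
Proof.
split; first by [].
split; first by move=> *; exact: bounded_add.
split; first by move=> *; exact: bounded_scale.
split; first by move=> *; exact: bounded_comp.
split; first by [].
by [].
Qed.

Lemma Acal_bounded T : Acal T -> bounded T.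
Proof.
move=> h; apply: h; first exact: cstar_bounded.
  exact: bounded_shift.
by move=> a /cZ_bound [B hB]; exact: bounded_multK hB.
Qed.

End S.

Lemma realBW (R : realType) (u : nat -> R) C : (forall n, `|u n| <= C) ->
  exists phi : nat -> nat, (forall n, (phi n < phi n.+1)%N) /\
   forall e : R, 0 < e -> exists N : nat, forall m n : nat, (N <= m)%N -> (N <= n)%N ->
     `|u (phi m) - u (phi n)| < e.
Proof.
move=> hC.
have hb : bounded_fun u.
  have PF := @globally_properfilter nat setT 0%N I.
  by rewrite /= ex_bound; exists C => n _; exact: hC.
have [f finc fc] := bolzano_weierstrass hb.
exists f; split.
  move=> n; rewrite ltnNge; apply/negP => h; have := finc n.+1 n.
  by rewrite !leEnat h ltnn.
move=> e e0; have /cvg_ex [l hl] := fc.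
have e20 : 0 < e / 2 by rewrite divr_gt0.
move/cvgrPdist_lt: hl => /(_ (e/2) e20) [N _ HN].
exists N => m n hm hn.
have h1 : `|l - u (f m)| < e / 2 := HN m hm.
have h2 : `|l - u (f n)| < e / 2 := HN n hn.
have := ler_distD l (u (f m)) (u (f n)).
rewrite (distrC (u (f m)) l); lra.
Qed.

Lemma cabs2E (R : realType) (z : R[i]) : cabs2 z = complex.Re z ^+ 2 + complex.Im z ^+ 2.
Proof. by case: z => a b; rewrite /cabs2 /normc /= sqr_sqrtr // addr_ge0 // sqr_ge0. Qed.

Lemma cabs2_subE (R : realType) (z w : R[i]) : cabs2 (z - w) =
  (complex.Re z - complex.Re w) ^+ 2 + (complex.Im z - complex.Im w) ^+ 2.
Proof. by rewrite cabs2E; case: z w => a b [c d]. Qed.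

Lemma incr_mono (p : nat -> nat) : (forall n, (p n < p n.+1)%N) ->
  forall m n, (m < n)%N -> (p m < p n)%N.
Proof.
move=> hp m; elim => [|n IH]; first by [].
rewrite ltnS leq_eqVlt => /orP [/eqP ->|/IH h]; first exact: hp.
exact: ltn_trans h (hp n).
Qed.

Lemma incr_ge (p : nat -> nat) : (forall n, (p n < p n.+1)%N) -> forall n, (n <= p n)%N.
Proof. by move=> hp; elim => [|n IH] //; apply: leq_ltn_trans IH (hp n). Qed.

Lemma sq_small (R : realType) (x d e : R) : `|x| < d -> d <= 1 -> d <= e -> x ^+ 2 < e.
Proof.
move=> h1 h2 h3; rewrite -real_normK ?num_real //; have := normr_ge0 x; nra.
Qed.

Lemma complexBW (R : realType) (z : nat -> R[i]) C : (forall n, cabs2 (z n) <= C) ->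
  exists phi : nat -> nat, (forall n, (phi n < phi n.+1)%N) /\
   forall e : R, 0 < e -> exists N : nat, forall m n : nat, (N <= m)%N -> (N <= n)%N ->
     cabs2 (z (phi m) - z (phi n)) < e.
Proof.
move=> hC.
have C0 : 0 <= C by apply: le_trans (hC 0%N); rewrite /cabs2 sqr_ge0.
have bnd (x : R) : x ^+ 2 <= C -> `|x| <= 1 + C.
  move=> h; rewrite ler_norml; apply/andP; split; nra.
have hre n : complex.Re (z n) ^+ 2 <= C.
  by have := hC n; rewrite cabs2E; have := sqr_ge0 (complex.Im (z n)); nra.
have him n : complex.Im (z n) ^+ 2 <= C.
  by have := hC n; rewrite cabs2E; have := sqr_ge0 (complex.Re (z n)); nra.
have [p1 [i1 c1]] := @realBW R (fun n => complex.Re (z n)) (1 + C) (fun n => bnd _ (hre n)).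
have [p2 [i2 c2]] := @realBW R (fun n => complex.Im (z (p1 n))) (1 + C) (fun n => bnd _ (him _)).
exists (fun n => p1 (p2 n)); split.
  by move=> n; apply: incr_mono => //; exact: i2.
move=> e e0.
set d := Order.min 1 (e / 2).
have d0 : 0 < d by rewrite lt_min ltr01 divr_gt0.
have d1 : d <= 1 by rewrite ge_min lexx.
have d2 : d <= e / 2 by rewrite ge_min lexx orbT.
have [N1 h1] := c1 d d0; have [N2 h2] := c2 d d0.
exists (maxn N1 N2) => m n hm hn.
rewrite cabs2_subE.
have a1 := sq_small (h1 (p2 m) (p2 n) ltac:(have := incr_ge i2 m; lia) ltac:(have := incr_ge i2 n; lia)) d1 d2.
have a2 := sq_small (h2 m n ltac:(lia) ltac:(lia)) d1 d2.
lra.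
Qed.

Section S3.
Variable R : realType.
Implicit Types (x y : vec R) (T : op R).

Lemma Kcal_opeq T T' : Kcal T -> opeq T T' -> Kcal T'.
Proof.
move=> [[hl ha hs [M hM]] hc] he; split; first split.
- by move=> x hx; rewrite -he //; auto.
- by move=> x y hx hy; rewrite -!he //; [auto|exact: l2_add].
- by move=> c x hx; rewrite -!he //; [auto|exact: l2_scale].
- by exists M => x hx; rewrite -he //; auto.
move=> x hx; have [phi [hphi hC]] := hc x hx; exists phi; split => // e e0.
have [N hN] := hC e e0; exists N => m n hm hn.
by rewrite -!he; [exact: hN| exact: (hx _).1| exact: (hx _).1].
Qed.

Lemma Kcal_add T1 T2 : Kcal T1 -> Kcal T2 -> Kcal (oadd T1 T2).
Proof.
move=> [b1 c1] [b2 c2]; split; first exact: bounded_add.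
move=> x hx; have [p1 [i1 h1]] := c1 x hx.
have [p2 [i2 h2]] := c2 (fun n => x (p1 n)) (fun n => hx _).
exists (fun n => p1 (p2 n)); split; first by move=> n; apply: incr_mono.
move=> e e0; have e4 : 0 < e / 4 by rewrite divr_gt0.
have [N1 hN1] := h1 _ e4; have [N2 hN2] := h2 _ e4.
exists (maxn N1 N2) => m n hm hn; rewrite /oadd.
set a := T1 _; set b := T2 _; set c := T1 _; set d := T2 _.
have -> : vsub (vadd a b) (vadd c d) = vadd (vsub a c) (vsub b d).
  by apply/funext => k; rewrite /vsub /vadd; ring.
have l2x k : l2 (x k) := (hx k).1.
case: b1 => [l1 _ _ _]; case: b2 => [l2' _ _ _].
apply: le_lt_trans (nrm2_add (l2_sub (l1 _ (l2x _)) (l1 _ (l2x _))) (l2_sub (l2' _ (l2x _)) (l2' _ (l2x _)))) _.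
have g1 := hN1 (p2 m) (p2 n) ltac:(have := incr_ge i2 m; lia) ltac:(have := incr_ge i2 n; lia).
have g2 := hN2 m n ltac:(lia) ltac:(lia).
rewrite /a /b /c /d; lra.
Qed.

Lemma Kcal_zero : Kcal (fun _ : vec R => vzero R).
Proof.
split; first split.
- by move=> *; exact: l2_zero.
- by move=> *; apply/funext => k; rewrite /vadd /vzero addr0.
- by move=> *; apply/funext => k; rewrite /vscale /vzero mulr0.
- by exists 0 => x _; rewrite mul0r; exact: nrm2_zero.
move=> x hx; exists id; split => // e e0; exists 0%N => m n _ _.
have -> : vsub (vzero R) (vzero R) = vzero R by apply/funext => k; rewrite /vsub /vzero subrr.
exact: le_lt_trans (nrm2_zero R) e0.
Qed.

Lemma Kcal_rank1 (f : vec R -> R[i]) (w : vec R) C : l2 w ->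
  (forall x y, l2 x -> l2 y -> f (vadd x y) = f x + f y) ->
  (forall c x, l2 x -> f (vscale c x) = c * f x) ->
  (forall x, l2 x -> cabs2 (f x) <= C * nrm2 x) ->
  Kcal (fun x => vscale (f x) w).
Proof.
move=> hw fa fs fb; have nw0 := nrm2_ge0 hw.
split; first split.
- by move=> x hx; exact: l2_scale.
- by move=> x y hx hy; rewrite fa //; apply/funext => k; rewrite /vadd /vscale mulrDl.
- by move=> c x hx; rewrite fs //; apply/funext => k; rewrite /vscale mulrA.
- exists (C * nrm2 w) => x hx; apply: le_trans (nrm2_scale _ hw) _.
  have := fb x hx; have := nrm2_ge0 hx; nra.
move=> x hx.
have hz n : cabs2 (f (x n)) <= `|C|.
  have := fb _ (hx n).1; have := (hx n).2; have := nrm2_ge0 (hx n).1.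
  have := ler_norm C; have := normr_ge0 C; nra.
have [phi [iphi hphi]] := complexBW hz.
exists phi; split => // e e0.
have p1 : 0 < nrm2 w + 1 by lra.
have e'0 : 0 < e / (nrm2 w + 1) by rewrite divr_gt0.
have ee : e / (nrm2 w + 1) * (nrm2 w + 1) = e.
  by rewrite divfK // gt_eqF.
have [N hN] := hphi _ e'0; exists N => m n hm hn.
have -> : vsub (vscale (f (x (phi m))) w) (vscale (f (x (phi n))) w) =
          vscale (f (x (phi m)) - f (x (phi n))) w.
  by apply/funext => k; rewrite /vsub /vscale mulrBl.
apply: le_lt_trans (nrm2_scale _ hw) _.
have := hN m n hm hn; have := cabs2_ge0 (f (x (phi m)) - f (x (phi n))); nra.
Qed.

Definition vsum (N : nat) (F : nat -> vec R) : vec R := fun k => \sum_(s < N) F s k.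

Lemma Kcal_fin N (f : nat -> vec R -> R[i]) (w : nat -> vec R) C :
  (forall s, l2 (w s)) ->
  (forall s x y, l2 x -> l2 y -> f s (vadd x y) = f s x + f s y) ->
  (forall s c x, l2 x -> f s (vscale c x) = c * f s x) ->
  (forall s x, l2 x -> cabs2 (f s x) <= C * nrm2 x) ->
  Kcal (fun x => vsum N (fun s => vscale (f s x) (w s))).
Proof.
move=> hw fa fs fb; elim: N => [|N IH].
  apply: Kcal_opeq Kcal_zero _ => x _; apply/funext => k.
  by rewrite /vsum big_ord0.
apply: Kcal_opeq (Kcal_add IH (Kcal_rank1 (hw N) (fa N) (fs N) (fb N))) _ => x _.
by apply/funext => k; rewrite /vsum /oadd /vadd big_ord_recr.
Qed.


Definition chi (K : nat) : int -> R[i] :=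
  fun k => if (- (K%:Z) <= k) && (k < K%:Z) then 1 else 0.
Definition Pk (K : nat) : op R := multK (chi K).

Lemma window (g : int -> R[i]) (K N : nat) k :
  \sum_(s < N) g (s%:Z - K%:Z) * @E R (s%:Z - K%:Z) k =
  if (- (K%:Z) <= k) && (k < N%:Z - K%:Z) then g k else 0.
Proof.
elim: N => [|N IH].
  by rewrite big_ord0; case: ifP => //; lia.
rewrite big_ord_recr /= IH /E.
case: (boolP (k == N%:Z - K%:Z)) => /eqP h.
  rewrite mulr1 -h; case: ifP; first by lia.
  by case: ifP; [rewrite add0r | lia].
rewrite mulr0 addr0; case: ifP => h1; case: ifP => h2 //; lia.
Qed.

Lemma Pk_vsum K y : Pk K y = vsum (K.*2) (fun s => vscale (y (s%:Z - K%:Z)) (@E R (s%:Z - K%:Z))).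
Proof.
apply/funext => k; rewrite /Pk /multK /vsum /vscale window /chi.
have -> : (K.*2)%:Z - K%:Z = K%:Z by lia.
by case: ifP; rewrite ?mul1r ?mul0r.
Qed.

Lemma Kcal_PT K T : bounded T -> Kcal (ocomp (Pk K) T).
Proof.
move=> hT; have [M [M0 hM]] := bounded_M hT; move: hT => [l1 a1 s1 _].
apply: Kcal_opeq (@Kcal_fin (K.*2) (fun s x => T x (s%:Z - K%:Z))
   (fun s => @E R (s%:Z - K%:Z)) M _ _ _ _) _.
- by move=> s; exact: l2_E.
- by move=> s x y hx hy; rewrite a1.
- by move=> s c x hx; rewrite s1.
- move=> s x hx; apply: le_trans (coord_le _ (l1 _ hx)) _; exact: hM.
by move=> x _; rewrite /ocomp Pk_vsum.
Qed.

Lemma l2_vsum N F : (forall s, l2 (F s)) -> l2 (vsum N F).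
Proof.
move=> hF; elim: N => [|N IH].
  have -> : vsum 0 F = vzero R by apply/funext => k; rewrite /vsum big_ord0.
  exact: l2_zero.
have -> : vsum N.+1 F = vadd (vsum N F) (F N).
  by apply/funext => k; rewrite /vsum /vadd big_ord_recr.
exact: l2_add.
Qed.

Lemma T_vsum T N F : bounded T -> (forall s, l2 (F s)) ->
  T (vsum N F) = vsum N (fun s => T (F s)).
Proof.
move=> hT hF; move: (hT) => [l1 a1 s1 _]; elim: N => [|N IH].
  have -> : vsum 0 F = vscale 0 (vzero R) by apply/funext => k; rewrite /vsum big_ord0 /vscale mul0r.
  rewrite s1; last exact: l2_zero.
  by apply/funext => k; rewrite /vsum big_ord0 /vscale mul0r.
have -> : vsum N.+1 F = vadd (vsum N F) (F N).
  by apply/funext => k; rewrite /vsum /vadd big_ord_recr.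
rewrite a1 //; last exact: l2_vsum.
by rewrite IH; apply/funext => k; rewrite /vsum /vadd big_ord_recr.
Qed.

Lemma Kcal_TP K T : bounded T -> Kcal (ocomp T (Pk K)).
Proof.
move=> hT; move: (hT) => [l1 a1 s1 _].
apply: Kcal_opeq (@Kcal_fin (K.*2) (fun s x => x (s%:Z - K%:Z))
   (fun s => T (@E R (s%:Z - K%:Z))) 1 _ _ _ _) _.
- by move=> s; apply: l1; exact: l2_E.
- by [].
- by [].
- by move=> s x hx; rewrite mul1r; exact: coord_le.
move=> x hx; rewrite /ocomp Pk_vsum T_vsum //; last by move=> s; apply: l2_scale; exact: l2_E.
by apply/funext => k; rewrite /vsum; apply: eq_bigr => s _; rewrite s1 //; exact: l2_E.
Qed.

End S3.

Section S4.
Variable R : realType.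
Implicit Types (x y : vec R) (T : op R).

Lemma sum_seq_pick (r : seq int) (F : int -> R[i]) (t0 : int) : uniq r -> t0 \in r ->
  \sum_(t <- r) (if t0 == t then F t else 0) = F t0.
Proof.
elim: r => [|y r IH] //= /andP [ny ur]; rewrite in_cons big_cons.
case: (boolP (t0 == y)) => [/eqP ety|ne] hin.
  rewrite ety big1_seq ?addr0 // => t /andP [_ tr]; case: eqP => // e.
  by rewrite -e in tr; rewrite tr in ny.
move: hin => /= hin; by rewrite add0r IH.
Qed.

Lemma group_zero m (ns : 'I_m -> int) (c : 'I_m -> R[i]) (f : int -> R[i]) :
  (forall t, \sum_(i < m) (if ns i == t then c i else 0) = 0) ->
  \sum_(i < m) f (ns i) * c i = 0.
Proof.
move=> H; set r := undup [seq ns i | i <- enum 'I_m].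
have ur : uniq r by exact: undup_uniq.
have inr i : ns i \in r by rewrite mem_undup map_f // mem_enum.
have e i : f (ns i) * c i = \sum_(t <- r) (if ns i == t then f t * c i else 0).
  by rewrite (sum_seq_pick (fun t => f t * c i) ur (inr i)).
under eq_bigr => i _ do rewrite e.
rewrite exchange_big /= big1_seq // => t _.
have -> : \sum_(i < m) (if ns i == t then f t * c i else 0) =
  f t * \sum_(i < m) (if ns i == t then c i else 0).
  by rewrite mulr_sumr; apply: eq_bigr => i _; case: ifP; rewrite ?mulr0.
by rewrite H mulr0.
Qed.

Lemma bound_fun m (f : 'I_m -> int) : exists B : nat, forall i, - (B%:Z) <= f i <= B%:Z.
Proof.
exists (\sum_(i < m) absz (f i))%N => i.
have : (absz (f i) <= \sum_(i < m) absz (f i))%N.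
  by rewrite (bigD1 i) //= leq_addr.
lia.
Qed.

Lemma vanish T (v : int -> R[i]) (B : nat) (js : nat -> int) :
  Kcal T ->
  (forall s, ~~ ((- (B%:Z) <= s) && (s <= B%:Z)) -> v s = 0) ->
  (forall n n', (n < n')%N -> (2 * B%:Z < js n' - js n) \/ (2 * B%:Z < js n - js n')) ->
  (forall n, T (@E R (js n)) = fun k => v (k - js n)) ->
  forall t, v t = 0.
Proof.
move=> [[l1 _ _ _] hc] hv hjs hT t.
case: (boolP ((- (B%:Z) <= t) && (t <= B%:Z))) => ht; last exact: hv.
suff H : forall e : R, 0 < e -> cabs2 (v t) < e.
  apply: cabs2_eq0; apply/eqP; rewrite eq_le cabs2_ge0 andbT leNgt; apply/negP => hp.
  by have := H _ hp; rewrite ltxx.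
move=> e e0.
have [phi [iphi hphi]] := hc (fun n => @E R (js n)) (fun n => conj (l2_E _ _) (nrm2_E _ _)).
have [N hN] := hphi e e0; have h := hN N N.+1 (leqnn _) (leqnSn _).
have hl := l2_sub (l1 _ (l2_E R (js (phi N)))) (l1 _ (l2_E R (js (phi N.+1)))).
have hc' := coord_le (t + js (phi N)) hl.
have hjj := hjs _ _ (iphi N).
move: hc' h; rewrite !hT /vsub.
rewrite (hv (t + js (phi N) - js (phi N.+1))); last by lia.
rewrite subr0 addrK => h1 h2; exact: le_lt_trans h1 h2.
Qed.

End S4.

Section S5.
Variable R : realType.
Implicit Types (x y : vec R) (T : op R).

Lemma Aalg_add T1 T2 : Aalg T1 -> Aalg T2 -> Aalg (oadd T1 T2).
Proof.
move=> [m1 [ns1 [as1 [h1 e1]]]] [m2 [ns2 [as2 [h2 e2]]]].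
exists (m1 + m2)%N.
exists (fun i => match @fintype.split m1 m2 i with inl j => ns1 j | inr j => ns2 j end).
exists (fun i => match @fintype.split m1 m2 i with inl j => as1 j | inr j => as2 j end).
split.
  by move=> i; case: (@fintype.split m1 m2 i).
move=> x hx; rewrite /oadd e1 // e2 //; apply/funext => k.
rewrite /vadd big_split_ord /=; congr (_ + _); apply: eq_bigr => i _.
  by have -> : @fintype.split m1 m2 (lshift m2 i) = inl i := unsplitK (inl i).
by have -> : @fintype.split m1 m2 (rshift m1 i) = inr i := unsplitK (inr i).
Qed.

Lemma Aalg_scale c T : Aalg T -> Aalg (oscale c T).
Proof.
move=> [m [ns [as_ [h e]]]].
exists m, ns, (fun i j => c * as_ i j); split.
  move=> i; have [k0 hk0] := h i; exists k0 => k.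
  by have [a b] := hk0 k; split => hk; [rewrite a|rewrite b].
move=> x hx; rewrite /oscale e //; apply/funext => k.
by rewrite /vscale mulr_sumr; apply: eq_bigr => i _; rewrite mulrA.
Qed.

Lemma Aalg_Pk K : Aalg (@Pk R K).
Proof.
exists 1%N, (fun _ => 0), (fun _ => @chi R K); split.
  move=> _; exists (K%:Z + 1) => k; rewrite /chi; split => hk;
  by case: ifP; case: ifP => //; lia.
by move=> x _; apply/funext => k; rewrite big_ord1 subr0.
Qed.

Lemma Aalg_Pk_comp K T : Aalg T -> Aalg (ocomp (@Pk R K) T).
Proof.
move=> [m [ns [as_ [h e]]]].
exists m, ns, (fun i j => @chi R K (j + ns i) * as_ i j); split.
  move=> i; exists ((K + 1)%N%:Z + (absz (ns i))%:Z) => k; rewrite /chi; split => hk;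
  by case: ifP; case: ifP; rewrite ?mul0r //; lia.
move=> x hx; rewrite /ocomp e //; apply/funext => k.
rewrite /Pk /multK mulr_sumr; apply: eq_bigr => i _.
by rewrite subrK mulrA.
Qed.

End S5.

Section S6.
Variable R : realType.
Implicit Types (x y : vec R) (T : op R).

Lemma eq_sub_sym (k n j : int) : (k - n == j) = (n == k - j).
Proof. by apply/eqP/eqP => h; lia. Qed.

Lemma l2_Pk K x : l2 x -> l2 (@Pk R K x).
Proof.
have hb : bounded (@Pk R K).
  apply: (@bounded_multK R _ 1) => k; rewrite /chi; case: ifP => _.
    by rewrite cabs21.
  by rewrite cabs20.
by case: hb => l _ _ _; apply: l.
Qed.

Lemma struct a : Aalg a -> Kcal a -> exists K : nat,
  opeq a (ocomp (@Pk R K) a) /\ opeq a (ocomp a (@Pk R K)).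
Proof.
move=> [m [ns [as_ [hev heq]]]] hK.
have [k0 hk0] := choice hev.
have [B1 hB1] := bound_fun k0; have [B2 hB2] := bound_fun ns.
set B := (B1 + B2)%N.
set cp := fun i => as_ i B%:Z; set cm := fun i => as_ i (- B%:Z).
have hcp i j : B%:Z <= j -> as_ i j = cp i.
  move=> hj; have hi := hB1 i.
  rewrite /cp (hk0 i j).1; last by lia.
  by rewrite (hk0 i B%:Z).1 //; lia.
have hcm i j : j <= - B%:Z -> as_ i j = cm i.
  move=> hj; have hi := hB1 i.
  rewrite /cm (hk0 i j).2; last by lia.
  by rewrite (hk0 i (- B%:Z)).2 //; lia.
set vp := fun t => \sum_(i < m) (if ns i == t then cp i else 0).
set vm := fun t => \sum_(i < m) (if ns i == t then cm i else 0).
have vout (c : 'I_m -> R[i]) s : ~~ ((- (B%:Z) <= s) && (s <= B%:Z)) ->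
    \sum_(i < m) (if ns i == s then c i else 0) = 0.
  move=> hs; rewrite big1 // => i _; case: eqP => // e.
  by have := hB2 i; lia.
have vp0 : forall t, vp t = 0.
  apply: (@vanish R a vp B (fun n => B%:Z + (n * (2 * B + 1))%N%:Z) hK).
  - by move=> s hs; exact: vout.
  - move=> n n' hn; left.
    have h := leq_mul hn (leqnn (2 * B + 1)); rewrite mulSn in h.
    move: h; generalize (n * (2 * B + 1))%N (n' * (2 * B + 1))%N => a1 b1 h; lia.
  move=> n; rewrite heq; last exact: l2_E.
  apply/funext => k; rewrite /vp; apply: eq_bigr => i _; rewrite /E eq_sub_sym.
  case: eqP => h; last by rewrite mulr0.
  by rewrite mulr1 (hcp i) //; lia.
have vm0 : forall t, vm t = 0.
  apply: (@vanish R a vm B (fun n => - B%:Z - (n * (2 * B + 1))%N%:Z) hK).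
  - by move=> s hs; exact: vout.
  - move=> n n' hn; right.
    have h := leq_mul hn (leqnn (2 * B + 1)); rewrite mulSn in h.
    move: h; generalize (n * (2 * B + 1))%N (n' * (2 * B + 1))%N => a1 b1 h; lia.
  move=> n; rewrite heq; last exact: l2_E.
  apply/funext => k; rewrite /vm; apply: eq_bigr => i _; rewrite /E eq_sub_sym.
  case: eqP => h; last by rewrite mulr0.
  by rewrite mulr1 (hcm i) //; lia.
exists (B + B)%N; split.
  move=> x hx; rewrite /ocomp heq //; apply/funext => k.
  rewrite /Pk /multK /chi; case: ifP => hk; first by rewrite mul1r.
  rewrite mul0r.
  case: (boolP ((B + B)%N%:Z <= k)) => hk2.
    rewrite (eq_bigr (fun i => x (k - ns i) * cp i)); last first.
      by move=> i _; rewrite (hcp i); [exact: mulrC | have := hB2 i; lia].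
    by apply: (@group_zero R m ns _ (fun t => x (k - t))) => t; exact: vp0.
  rewrite (eq_bigr (fun i => x (k - ns i) * cm i)); last first.
    by move=> i _; rewrite (hcm i); [exact: mulrC | have := hB2 i; lia].
  by apply: (@group_zero R m ns _ (fun t => x (k - t))) => t; exact: vm0.
move=> x hx; rewrite /ocomp !heq //; last exact: l2_Pk.
apply/funext => k.
set K := (B + B)%N.
have e1 := @group_zero R m ns _ (fun t => if K%:Z <= k - t then x (k - t) else 0) vp0.
have e2 := @group_zero R m ns _ (fun t => if k - t < - K%:Z then x (k - t) else 0) vm0.
apply/eqP; rewrite -subr_eq0 -sumrB; apply/eqP.
rewrite -[RHS](addr0 0) -[X in _ = X + _]e1 -[X in _ = _ + X]e2 -big_split; apply: eq_bigr => i _ /=.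
rewrite /Pk /multK /chi; case: ifP => hc.
  by case: ifP; case: ifP; rewrite ?mul0r ?addr0 ?mul1r ?subrr //; lia.
rewrite mul0r mulr0 subr0.
case: ifP => h1; case: ifP => h2; rewrite ?mul0r ?addr0 ?add0r; try lia.
  by rewrite (hcp i); [exact: mulrC | lia].
by rewrite (hcm i); [exact: mulrC | lia].
Qed.

End S6.

Theorem mainTheorem8 (R : realType) (d : op R -> op R) :
  derivation d ->
  (forall a : op R, Aalg a -> Kcal a -> Kcal (d a)) /\
  (forall a b : op R, Aalg a -> Aalg b -> Kcal (osub a b) ->
     Kcal (osub (d a) (d b))).
Proof.
move=> [hA hwd hadd hsc hleib].
have part1 : forall a : op R, Aalg a -> Kcal a -> Kcal (d a).
  move=> a ha hk; have [K [e1 e2]] := struct ha hk.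
  have hP := Aalg_Pk R K; have hPa := Aalg_Pk_comp K ha.
  have bda := Acal_bounded (hA _ ha); have bdP := Acal_bounded (hA _ hP).
  have ba := hk.1.
  have k1 : Kcal (ocomp (Pk K) (d a)) := Kcal_PT K bda.
  have k2 : Kcal (ocomp (d (Pk K)) a).
    apply: Kcal_opeq (Kcal_TP K (bounded_comp bdP ba)) _ => x hx.
    by have := e2 x hx; rewrite /ocomp => <-.
  apply: Kcal_opeq (Kcal_add k1 k2) _ => x hx.
  by rewrite (hwd _ _ ha hPa e1 x hx) (hleib _ _ hP ha x hx).
split => // a b ha hb hk.
have hb' := Aalg_scale (-1) hb.
have hc := Aalg_add ha hb'.
have hcK : Kcal (oadd a (oscale (-1) b)).
  apply: Kcal_opeq hk _ => x _; apply/funext => k.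
  by rewrite /osub /oadd /vsub /vadd /oscale /vscale mulN1r.
apply: Kcal_opeq (part1 _ hc hcK) _ => x hx.
rewrite (hadd _ _ ha hb' x hx) /oadd (hsc (-1) b hb x hx).
by apply/funext => k; rewrite /oscale /vscale /osub /vsub /vadd mulN1r.
Qed.
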